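(* Let $A$ be a Banach algebra. (a) If $A$ has no unit and has a two-sided approximate identity (not necessarily bounded), then there is a net $(y_\mu)_{\mu\in\Lambda_0}$ in $A$ such that $y_\mu x\to0$ and $xy_\mu\to 0$ for every $x\in A$, and $y_\mu\not\to 0$. (b) If $A$ has no left unit and has a left approximate identity, then there is a net $(y_\mu)$ in $A$ with $y_\mu x\to 0$ for every $x\in A$ and $y_\mu\not\to0$. (c) If $A$ has no right unit and has a right approximate identity, then there is a net $(y_\mu)$ in $A$ with $xy_\mu\to 0$ for every $x\in A$ and $y_\mu\not\to0$. *)

(* Defs.v *)
From Stdlib Require Import Reals.
Open Scope R_scope.

Record BanachAlgebra := mkBA {
  ba_car :> Type;
  ba_zero : ba_car;
  ba_add : ba_car -> ba_car -> ba_car;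
  ba_opp : ba_car -> ba_car;
  ba_scal : R -> ba_car -> ba_car;
  ba_mul : ba_car -> ba_car -> ba_car;
  ba_norm : ba_car -> R;
  ba_addA : forall x y z, ba_add x (ba_add y z) = ba_add (ba_add x y) z;
  ba_addC : forall x y, ba_add x y = ba_add y x;
  ba_add0 : forall x, ba_add ba_zero x = x;
  ba_addN : forall x, ba_add x (ba_opp x) = ba_zero;
  ba_scalA : forall a b x, ba_scal a (ba_scal b x) = ba_scal (a * b) x;
  ba_scal1 : forall x, ba_scal 1 x = x;
  ba_scalDr : forall a x y, ba_scal a (ba_add x y) = ba_add (ba_scal a x) (ba_scal a y);
  ba_scalDl : forall a b x, ba_scal (a + b) x = ba_add (ba_scal a x) (ba_scal b x);
  ba_mulA : forall x y z, ba_mul x (ba_mul y z) = ba_mul (ba_mul x y) z;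
  ba_mulDl : forall x y z, ba_mul (ba_add x y) z = ba_add (ba_mul x z) (ba_mul y z);
  ba_mulDr : forall x y z, ba_mul x (ba_add y z) = ba_add (ba_mul x y) (ba_mul x z);
  ba_scal_mull : forall a x y, ba_mul (ba_scal a x) y = ba_scal a (ba_mul x y);
  ba_scal_mulr : forall a x y, ba_mul x (ba_scal a y) = ba_scal a (ba_mul x y);
  ba_norm_eq0 : forall x, ba_norm x = 0 -> x = ba_zero;
  ba_normD : forall x y, ba_norm (ba_add x y) <= ba_norm x + ba_norm y;
  ba_normZ : forall a x, ba_norm (ba_scal a x) = Rabs a * ba_norm x;
  ba_normM : forall x y, ba_norm (ba_mul x y) <= ba_norm x * ba_norm y;
  ba_complete : forall u : nat -> ba_car,
    (forall eps, 0 < eps -> exists N, forall m n, (N <= m)%nat -> (N <= n)%nat ->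
        ba_norm (ba_add (u m) (ba_opp (u n))) < eps) ->
    exists l, forall eps, 0 < eps -> exists N, forall n, (N <= n)%nat ->
        ba_norm (ba_add (u n) (ba_opp l)) < eps
}.

Arguments ba_zero {b0} : rename.
Arguments ba_add {b0} : rename.
Arguments ba_opp {b0} : rename.
Arguments ba_mul {b0} : rename.
Arguments ba_norm {b0} : rename.

Record DirectedSet := mkDirected {
  ds_car :> Type;
  ds_le : ds_car -> ds_car -> Prop;
  ds_inhabited : inhabited ds_car;
  ds_refl : forall i, ds_le i i;
  ds_trans : forall i j k, ds_le i j -> ds_le j k -> ds_le i k;
  ds_directed : forall i j, exists k, ds_le i k /\ ds_le j k
}.

Definition net_converges (A : BanachAlgebra) (D : DirectedSet) (y : D -> A) (l : A) : Prop :=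
  forall eps, 0 < eps -> exists i0 : D, forall i : D, ds_le D i0 i ->
    ba_norm (ba_add (y i) (ba_opp l)) < eps.

Definition is_unit (A : BanachAlgebra) (e : A) : Prop :=
  forall x : A, ba_mul e x = x /\ ba_mul x e = x.
Definition is_left_unit (A : BanachAlgebra) (e : A) : Prop :=
  forall x : A, ba_mul e x = x.
Definition is_right_unit (A : BanachAlgebra) (e : A) : Prop :=
  forall x : A, ba_mul x e = x.

Definition is_left_approx_identity (A : BanachAlgebra) (D : DirectedSet) (e : D -> A) : Prop :=
  forall x : A, net_converges A D (fun i => ba_mul (e i) x) x.
Definition is_right_approx_identity (A : BanachAlgebra) (D : DirectedSet) (e : D -> A) : Prop :=
  forall x : A, net_converges A D (fun i => ba_mul x (e i)) x.
Definition is_approx_identity (A : BanachAlgebra) (D : DirectedSet) (e : D -> A) : Prop :=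
  is_left_approx_identity A D e /\ is_right_approx_identity A D e.

(* Main.v *)
Require Import Defs.
From Stdlib Require Import Reals Lra Lia IndefiniteDescription.
Open Scope R_scope.

Section Alg.
Lemma addr0 (A : BanachAlgebra) (x : A) : ba_add x ba_zero = x.
Proof. rewrite ba_addC; apply ba_add0. Qed.
Lemma addNl (A : BanachAlgebra) (x : A) : ba_add (ba_opp x) x = ba_zero.
Proof. rewrite ba_addC; apply ba_addN. Qed.
Lemma add_cancel (A : BanachAlgebra) (a b c : A) : ba_add a b = ba_add a c -> b = c.
Proof.
  intro H. rewrite <- (ba_add0 A b), <- (addNl A a), <- ba_addA, H, ba_addA, addNl, ba_add0.
  reflexivity.
Qed.
Lemma scal0 (A : BanachAlgebra) (x : A) : ba_scal A 0 x = ba_zero.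
Proof.
  apply (add_cancel A (ba_scal A 0 x)). rewrite addr0, <- ba_scalDl.
  replace (0+0) with 0 by ring. reflexivity.
Qed.
Lemma scal_m1 (A : BanachAlgebra) (x : A) : ba_scal A (-1) x = ba_opp x.
Proof.
  apply (add_cancel A x). rewrite ba_addN.
  rewrite <- (ba_scal1 A x) at 1. rewrite <- ba_scalDl.
  replace (1 + -1) with 0 by ring. apply scal0.
Qed.
Lemma opp_opp (A : BanachAlgebra) (x : A) : ba_opp (ba_opp x) = x.
Proof. rewrite <- !scal_m1, ba_scalA. replace (-1 * -1) with 1 by ring. apply ba_scal1. Qed.
Lemma opp_add (A : BanachAlgebra) (a b : A) : ba_opp (ba_add a b) = ba_add (ba_opp a) (ba_opp b).
Proof. rewrite <- !scal_m1. apply ba_scalDr. Qed.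
Lemma opp0 (A : BanachAlgebra) : ba_opp (@ba_zero A) = ba_zero.
Proof. rewrite <- (ba_add0 A (ba_opp ba_zero)). apply ba_addN. Qed.
Lemma mul_oppr (A : BanachAlgebra) (x y : A) : ba_mul x (ba_opp y) = ba_opp (ba_mul x y).
Proof. rewrite <- !scal_m1. apply ba_scal_mulr. Qed.
Lemma mul_oppl (A : BanachAlgebra) (x y : A) : ba_mul (ba_opp x) y = ba_opp (ba_mul x y).
Proof. rewrite <- !scal_m1. apply ba_scal_mull. Qed.
Lemma norm0 (A : BanachAlgebra) : ba_norm (@ba_zero A) = 0.
Proof. rewrite <- (scal0 A ba_zero), ba_normZ, Rabs_R0. ring. Qed.
Lemma norm_opp (A : BanachAlgebra) (x : A) : ba_norm (ba_opp x) = ba_norm x.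
Proof. rewrite <- scal_m1, ba_normZ, Rabs_left by lra. ring. Qed.
Lemma norm_ge0 (A : BanachAlgebra) (x : A) : 0 <= ba_norm x.
Proof.
  pose proof (ba_normD A x (ba_opp x)) as H. rewrite ba_addN, norm0, norm_opp in H. lra.
Qed.
Lemma sub_eq0 (A : BanachAlgebra) (a b : A) : ba_norm (ba_add a (ba_opp b)) = 0 -> a = b.
Proof.
  intro H. apply ba_norm_eq0 in H.
  rewrite <- (addr0 A a), <- (addNl A b), ba_addA, H, ba_add0. reflexivity.
Qed.
Lemma tri (A : BanachAlgebra) (a b c : A) :
  ba_norm (ba_add a (ba_opp c)) <= ba_norm (ba_add a (ba_opp b)) + ba_norm (ba_add b (ba_opp c)).
Proof.
  replace (ba_add a (ba_opp c)) with (ba_add (ba_add a (ba_opp b)) (ba_add b (ba_opp c))).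
  - apply ba_normD.
  - rewrite <- ba_addA, (ba_addA A (ba_opp b)), addNl, ba_add0. reflexivity.
Qed.
Lemma norm_sym (A : BanachAlgebra) (a b : A) :
  ba_norm (ba_add a (ba_opp b)) = ba_norm (ba_add b (ba_opp a)).
Proof.
  rewrite <- norm_opp, opp_add, opp_opp, ba_addC. reflexivity.
Qed.
Lemma mul_subl (A : BanachAlgebra) (a b x : A) :
  ba_mul (ba_add a (ba_opp b)) x = ba_add (ba_mul a x) (ba_opp (ba_mul b x)).
Proof. rewrite ba_mulDl, mul_oppl. reflexivity. Qed.
Lemma mul_subr (A : BanachAlgebra) (a b x : A) :
  ba_mul x (ba_add a (ba_opp b)) = ba_add (ba_mul x a) (ba_opp (ba_mul x b)).
Proof. rewrite ba_mulDr, mul_oppr. reflexivity. Qed.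
Lemma sub0 (A : BanachAlgebra) (a : A) : ba_add a (ba_opp ba_zero) = a.
Proof. rewrite opp0. apply addr0. Qed.
End Alg.

Definition prodD (D : DirectedSet) : DirectedSet.
Proof.
  refine (mkDirected (D * D)
    (fun p q => ds_le D (fst p) (fst q) /\ ds_le D (snd p) (snd q)) _ _ _ _).
  - destruct (ds_inhabited D) as [d]. exact (inhabits (d, d)).
  - intros [i j]; split; apply ds_refl.
  - intros [i1 j1] [i2 j2] [i3 j3] [H1 H2] [H3 H4]; split; eapply ds_trans; eauto.
  - intros [i1 j1] [i2 j2]. destruct (ds_directed D i1 i2) as [k [? ?]].
    destruct (ds_directed D j1 j2) as [l [? ?]]. exists (k, l); split; split; auto.
Defined.

Lemma conv_ext (A : BanachAlgebra) (D : DirectedSet) (f g : D -> A) l :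
  (forall i, f i = g i) -> net_converges A D f l -> net_converges A D g l.
Proof.
  intros He H eps Heps. destruct (H eps Heps) as [i0 Hi]. exists i0. intros i Hl.
  rewrite <- He. auto.
Qed.

Lemma conv_unique (A : BanachAlgebra) (D : DirectedSet) (g : D -> A) x w :
  net_converges A D g x -> net_converges A D g w -> w = x.
Proof.
  intros H1 H2. apply sub_eq0. apply Rle_antisym; [|apply norm_ge0].
  apply Rnot_lt_le; intro Hp.
  destruct (H1 (ba_norm (ba_add w (ba_opp x)) / 2)) as [i1 Hi1]; [lra|].
  destruct (H2 (ba_norm (ba_add w (ba_opp x)) / 2)) as [i2 Hi2]; [lra|].
  destruct (ds_directed D i1 i2) as [k [k1 k2]].
  specialize (Hi1 k k1). specialize (Hi2 k k2).
  pose proof (tri A w (g k) x). rewrite (norm_sym A w (g k)) in H. lra.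
Qed.

Lemma prod_bound a b eps : 0 <= a -> 0 <= b -> a < eps / (b + 1) -> a * b < eps.
Proof.
  intros Ha Hb H. set (q := eps / (b + 1)) in *.
  assert (eps = q * (b + 1)) by (unfold q; field; lra). nra.
Qed.

Lemma conv_mulr (A : BanachAlgebra) (D : DirectedSet) (e : D -> A) l x :
  net_converges A D e l -> net_converges A D (fun i => ba_mul (e i) x) (ba_mul l x).
Proof.
  intros H eps Heps. pose proof (norm_ge0 A x).
  destruct (H (eps / (ba_norm x + 1))) as [i0 Hi0].
  { apply Rdiv_lt_0_compat; lra. }
  exists i0; intros i Hi. rewrite <- mul_subl.
  eapply Rle_lt_trans; [apply ba_normM|]. apply prod_bound; auto. apply norm_ge0.
Qed.

Lemma conv_mull (A : BanachAlgebra) (D : DirectedSet) (e : D -> A) l x :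
  net_converges A D e l -> net_converges A D (fun i => ba_mul x (e i)) (ba_mul x l).
Proof.
  intros H eps Heps. pose proof (norm_ge0 A x).
  destruct (H (eps / (ba_norm x + 1))) as [i0 Hi0].
  { apply Rdiv_lt_0_compat; lra. }
  exists i0; intros i Hi. rewrite <- mul_subr.
  eapply Rle_lt_trans; [apply ba_normM|]. rewrite Rmult_comm.
  apply prod_bound; auto. apply norm_ge0.
Qed.

Lemma diff_conv (A : BanachAlgebra) (D : DirectedSet) (g : D -> A) x :
  net_converges A D g x ->
  net_converges A (prodD D) (fun p => ba_add (g (fst p)) (ba_opp (g (snd p)))) ba_zero.
Proof.
  intros H eps Heps. destruct (H (eps/2)) as [i0 Hi0]; [lra|].
  exists (i0, i0). intros [i j] [Hi Hj]. simpl in *. rewrite sub0.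
  pose proof (tri A (g i) x (g j)). rewrite (norm_sym A x (g j)) in H0.
  pose proof (Hi0 i Hi). pose proof (Hi0 j Hj). lra.
Qed.

Lemma small_inv eps : 0 < eps -> exists N : nat, / INR (S N) < eps.
Proof.
  intro H. destruct (archimed_cor1 eps H) as [[|k] [Hk Hk']]; [lia|]. exists k; auto.
Qed.

Lemma cauchy_conv (A : BanachAlgebra) (D : DirectedSet) (e : D -> A) :
  net_converges A (prodD D) (fun p => ba_add (e (fst p)) (ba_opp (e (snd p)))) ba_zero ->
  exists l, net_converges A D e l.
Proof.
  intro H.
  assert (Hc : forall n : nat, exists k : D, forall i j, ds_le D k i -> ds_le D k j ->
             ba_norm (ba_add (e i) (ba_opp (e j))) < / INR (S n)).
  { intro n. destruct (H (/ INR (S n))) as [[k1 k2] Hk].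
    { apply Rinv_0_lt_compat, lt_0_INR; lia. }
    destruct (ds_directed D k1 k2) as [k [? ?]]. exists k. intros i j Hi Hj.
    specialize (Hk (i, j)). simpl in Hk. rewrite sub0 in Hk. apply Hk.
    split; eapply ds_trans; eauto. }
  set (c := fun n => proj1_sig (constructive_indefinite_description _ (Hc n))).
  assert (Hcc : forall n i j, ds_le D (c n) i -> ds_le D (c n) j ->
             ba_norm (ba_add (e i) (ba_opp (e j))) < / INR (S n)).
  { intro n. exact (proj2_sig (constructive_indefinite_description _ (Hc n))). }
  clearbody c.
  assert (Hub : forall a b : D, exists k, ds_le D a k /\ ds_le D b k) by apply ds_directed.
  set (ub := fun a b => proj1_sig (constructive_indefinite_description _ (Hub a b))).
  assert (Hubp : forall a b, ds_le D a (ub a b) /\ ds_le D b (ub a b)).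
  { intros a b. exact (proj2_sig (constructive_indefinite_description _ (Hub a b))). }
  clearbody ub.
  set (d := fix d (n : nat) : D := match n with O => c O | S m => ub (d m) (c (S m)) end).
  assert (Hd1 : forall n, ds_le D (c n) (d n)).
  { intros [|n]; simpl; [apply ds_refl | apply Hubp]. }
  assert (Hd2 : forall m n, (m <= n)%nat -> ds_le D (d m) (d n)).
  { intros m n Hmn. induction Hmn; [apply ds_refl|].
    eapply ds_trans; [apply IHHmn|]. simpl. apply Hubp. }
  assert (Hd3 : forall m n, (m <= n)%nat -> ds_le D (c m) (d n)).
  { intros. eapply ds_trans; [apply Hd1|]. apply Hd2; auto. }
  destruct (ba_complete A (fun n => e (d n))) as [l Hl].
  { intros eps Heps. destruct (small_inv eps Heps) as [N HN]. exists N.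
    intros m n Hm Hn. eapply Rlt_trans; [|apply HN]. apply Hcc; apply Hd3; auto. }
  exists l. intros eps Heps.
  destruct (small_inv (eps/2)) as [N HN]; [lra|].
  destruct (Hl (eps/2)) as [N' HN']; [lra|].
  exists (d (Nat.max N N')). intros i Hi.
  pose proof (tri A (e i) (e (d (Nat.max N N'))) l).
  assert (ba_norm (ba_add (e i) (ba_opp (e (d (Nat.max N N'))))) < / INR (S N)).
  { apply Hcc. - eapply ds_trans; [|apply Hi]. apply Hd3; lia. - apply Hd3; lia. }
  specialize (HN' (Nat.max N N')). assert (ba_norm (ba_add (e (d (Nat.max N N'))) (ba_opp l)) < eps/2) by (apply HN'; lia).
  lra.
Qed.

Theorem corollary1p3 (A : BanachAlgebra) :
  ( (~ exists e : A, is_unit A e) ->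
    (exists (D : DirectedSet) (e : D -> A), is_approx_identity A D e) ->
    exists (L : DirectedSet) (y : L -> A),
      (forall x : A, net_converges A L (fun m => ba_mul (y m) x) ba_zero /\
                     net_converges A L (fun m => ba_mul x (y m)) ba_zero) /\
      ~ net_converges A L y ba_zero )
  /\
  ( (~ exists e : A, is_left_unit A e) ->
    (exists (D : DirectedSet) (e : D -> A), is_left_approx_identity A D e) ->
    exists (L : DirectedSet) (y : L -> A),
      (forall x : A, net_converges A L (fun m => ba_mul (y m) x) ba_zero) /\
      ~ net_converges A L y ba_zero )
  /\
  ( (~ exists e : A, is_right_unit A e) ->
    (exists (D : DirectedSet) (e : D -> A), is_right_approx_identity A D e) ->
    exists (L : DirectedSet) (y : L -> A),
      (forall x : A, net_converges A L (fun m => ba_mul x (y m)) ba_zero) /\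
      ~ net_converges A L y ba_zero ).
Proof.
  split; [|split].
  - intros Hnu [D [e [HL HR]]].
    exists (prodD D), (fun p => ba_add (e (fst p)) (ba_opp (e (snd p)))). split.
    + intro x; split.
      * eapply conv_ext; [|exact (diff_conv A D _ x (HL x))].
        intro p; simpl. symmetry; apply mul_subl.
      * eapply conv_ext; [|exact (diff_conv A D _ x (HR x))].
        intro p; simpl. symmetry; apply mul_subr.
    + intro Hc. apply cauchy_conv in Hc as [l Hl]. apply Hnu. exists l. intro x; split.
      * exact (conv_unique A D _ _ _ (HL x) (conv_mulr A D e l x Hl)).
      * exact (conv_unique A D _ _ _ (HR x) (conv_mull A D e l x Hl)).
  - intros Hnu [D [e HL]].
    exists (prodD D), (fun p => ba_add (e (fst p)) (ba_opp (e (snd p)))). split.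
    + intro x. eapply conv_ext; [|exact (diff_conv A D _ x (HL x))].
      intro p; simpl. symmetry; apply mul_subl.
    + intro Hc. apply cauchy_conv in Hc as [l Hl]. apply Hnu. exists l. intro x.
      exact (conv_unique A D _ _ _ (HL x) (conv_mulr A D e l x Hl)).
  - intros Hnu [D [e HR]].
    exists (prodD D), (fun p => ba_add (e (fst p)) (ba_opp (e (snd p)))). split.
    + intro x. eapply conv_ext; [|exact (diff_conv A D _ x (HR x))].
      intro p; simpl. symmetry; apply mul_subr.
    + intro Hc. apply cauchy_conv in Hc as [l Hl]. apply Hnu. exists l. intro x.
      exact (conv_unique A D _ _ _ (HR x) (conv_mull A D e l x Hl)).
Qed.
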